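(* Let $n\ge3$, $\boldsymbol\ell=(\ell_1,\ldots,\ell_n)$ positive lengths, $\mu\in\mathbb{R}$, and $\tau$, $N>0$ smooth functions on $T^n$ of $s^1$ only; let $\tau^*=\int_{S^1}N\tau\,ds/\int_{S^1}N\,ds$. Suppose either (a) $\mu,\tau^*$ are nonzero with the same sign and $r=(\mu/\tau^* )^{1/n}$, or (b) $\mu=\tau^*=0$ and $r>0$ is arbitrary; and let $(\bar g,\bar K)=(g_{r\boldsymbol\ell},\ \tau\,(r\ell_1)^2(ds^1)^2)$ be the corresponding solution of the constraint equations generated by the conformal data set $(g_{\boldsymbol\ell},\mu\sigma^\flat_{\boldsymbol\ell},\tau,N)$. Let $\tau^\circ=\int_{S^1}\tau\,ds$ and $\hat{\boldsymbol\ell}=(r\ell_2,\ldots,r\ell_n)$. If $\tau^\circ\ne0$, then $\bar g$ and $\bar K$ are the induced metric and second fundamental form of a simple product embedding of $T^n$ into the flat Kasner spacetime $\mathcal K_\Psi\times T^{n-1}_{\hat{\boldsymbol\ell}}$ with $\Psi=(r\ell_1)\tau^\circ$. If $\tau^\circ=0$, then $\bar g$ and $\bar K$ are the induced metric and second fundamental form of a simple product embedding into a static toroidal spacetime $\mathcal C_L\times T^{n-1}_{\hat{\boldsymbol\ell}}$ for some $L>0$.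
   Context: $q=\frac{2n}{n-2}$, $\kappa=\frac{n-1}{n}$. $S^1=\mathbb{R}/\mathbb{Z}$ with unit coordinate $s$ ($\int_{S^1}ds=1$); $T^n$ has unit coordinates $(s^1,\ldots,s^n)$; $g_{\boldsymbol\ell}=\sum_k\ell_k^2(ds^k)^2$; $T^{m}_{\hat{\boldsymbol\ell}}$ is $T^m$ with $g_{\hat{\boldsymbol\ell}}$; $\sigma^\flat_{\boldsymbol\ell}=\kappa\ell_1^2(ds^1)^2-\frac1n\sum_{k\ge2}\ell_k^2(ds^k)^2$. $\mathbb{R}^{1,1}$ is $\mathbb{R}^2$ with coordinates $(t,x)$ and metric $-dt^2+dx^2$, time-oriented by $\partial_t$; $I_\pm=\{\pm t>|x|\}$. For $\Psi\ne0$, $B_\Psi$ is the linear boost with matrix $\begin{pmatrix}\cosh\Psi&\sinh\Psi\\ \sinh\Psi&\cosh\Psi\end{pmatrix}$; the Kasner surface $\mathcal K_\Psi$ is $I_+/\langle B_\Psi\rangle$ if $\Psi>0$ and $I_-/\langle B_\Psi\rangle$ if $\Psi<0$, with the inherited time-oriented flat Lorentzian metric. For $L>0$, $\mathcal C_L=\mathbb{R}^{1,1}/\langle(t,x)\mapsto(t,x+L)\rangle$. Products carry the product Lorentzian metric; $\mathcal K_\Psi\times T^{n-1}_{\hat{\boldsymbol\ell}}$ is isometric to a flat Kasner spacetime and $\mathcal C_L\times T^{n-1}_{\hat{\boldsymbol\ell}}$ is a static toroidal spacetime. A simple product embedding $\iota:T^n\to\Lambda\times T^{n-1}_{\hat{\boldsymbol\ell}}$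 ($\Lambda$ a Lorentzian surface) has the form $\iota(s^1,\ldots,s^n)=(\gamma(s^1),(s^2,\ldots,s^n))$ for a curve $\gamma:S^1\to\Lambda$. Induced second fundamental form: $K(X,Y)=-\langle n,\nabla_XY\rangle$ with $n$ the future unit normal. *)

(* Defs.v *)
From Stdlib Require Import Reals Lra ZArith.
From Coquelicot Require Import Coquelicot.
Open Scope R_scope.

(** Points of R^m are represented as functions nat -> R (only the first m
    coordinates matter).  Index convention: coordinate s^k of the paper is
    [s (k-1)], the length l_k is [l (k-1)]. *)

Definition smooth1 (f : R -> R) : Prop := forall k x, ex_derive_n f k x.

(** 1-periodic function: a function on S^1 = R/Z *)
Definition periodic1 (f : R -> R) : Prop := forall x, f (x + 1) = f x.

Definition upd (s : nat -> R) (i : nat) (h : R) : nat -> R :=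
  fun k => if Nat.eqb k i then s k + h else s k.

Definition pd (F : (nat -> R) -> (nat -> R)) (i : nat) (s : nat -> R) : nat -> R :=
  fun j => Derive (fun h => F (upd s i h) j) 0.

Definition pd2 (F : (nat -> R) -> (nat -> R)) (i k : nat) (s : nat -> R) : nat -> R :=
  fun j => Derive (fun h => pd F k (upd s i h) j) 0.

Definition mink (n : nat) (u v : nat -> R) : R :=
  - u 0%nat * v 0%nat + sum_f_R0 (fun a => u (S a) * v (S a)) (n - 1).

Definition induced_metric (n : nat) (F : (nat -> R) -> (nat -> R))
  (s : nat -> R) (i j : nat) : R := mink n (pd F i s) (pd F j s).

Definition future_unit_normal (n : nat) (F : (nat -> R) -> (nat -> R))
  (s : nat -> R) (nu : nat -> R) : Prop :=
  (forall i, (i < n)%nat -> mink n nu (pd F i s) = 0) /\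
  mink n nu nu = -1 /\ 0 < nu 0%nat.

Definition second_ff (n : nat) (F : (nat -> R) -> (nat -> R))
  (nu : nat -> R) (s : nat -> R) (i j : nat) : R := - mink n nu (pd2 F i j s).

(** The lift to the universal (Minkowski) cover R^{1,1} x R^{n-1} of the
    simple product embedding (s^1,...,s^n) |-> (gamma(s^1),(s^2,...,s^n)) into
    Lambda x T^{n-1}_{lhat}, where gamma is given by the lift (Gt,Gx) : R -> R^{1,1}
    and lhat k is the length of the (k+1)-st circle (k = 1..n-1). *)
Definition product_lift (Gt Gx : R -> R) (lhat : nat -> R)
  : (nat -> R) -> (nat -> R) :=
  fun s j => match j with
             | 0%nat => Gt (s 0%nat)
             | 1%nat => Gx (s 0%nat)
             | S (S k) => lhat (S k) * s (S k)
             end.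

Definition boost (Psi : R) (t x : R) : R * R :=
  (cosh Psi * t + sinh Psi * x, sinh Psi * t + cosh Psi * x).

(** (Gt,Gx) : R -> R^{1,1} is the lift of a smooth embedded closed curve
    gamma : S^1 -> K_Psi = I_{sign Psi} / <B_Psi>. *)
Definition kasner_curve_lift (Psi : R) (Gt Gx : R -> R) : Prop :=
  Psi <> 0 /\ smooth1 Gt /\ smooth1 Gx /\
  (forall s, if Rlt_dec 0 Psi then Rabs (Gx s) < Gt s else Rabs (Gx s) < - Gt s) /\
  (exists m : Z, forall s,
     (Gt (s + 1), Gx (s + 1)) = boost (IZR m * Psi) (Gt s) (Gx s)) /\
  (forall s, Derive Gt s <> 0 \/ Derive Gx s <> 0) /\
  (forall s s' (k : Z), (Gt s', Gx s') = boost (IZR k * Psi) (Gt s) (Gx s) ->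
     exists j : Z, s' = s + IZR j).

(** (Gt,Gx) : R -> R^{1,1} is the lift of a smooth embedded closed curve
    gamma : S^1 -> C_L = R^{1,1} / <(t,x) |-> (t,x+L)>. *)
Definition cylinder_curve_lift (L : R) (Gt Gx : R -> R) : Prop :=
  0 < L /\ smooth1 Gt /\ smooth1 Gx /\
  (exists m : Z, forall s, Gt (s + 1) = Gt s /\ Gx (s + 1) = Gx s + IZR m * L) /\
  (forall s, Derive Gt s <> 0 \/ Derive Gx s <> 0) /\
  (forall s s' (k : Z), Gt s' = Gt s -> Gx s' = Gx s + IZR k * L ->
     exists j : Z, s' = s + IZR j).

(** the pair (gbar, Kbar) is the induced metric and second fundamental form
    of the map F : T^n -> spacetime (computed on the Minkowski lift F) *)
Definition induces (n : nat) (F : (nat -> R) -> (nat -> R))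
  (gbar Kbar : (nat -> R) -> nat -> nat -> R) : Prop :=
  forall s : nat -> R,
    (forall i j, (i < n)%nat -> (j < n)%nat -> induced_metric n F s i j = gbar s i j) /\
    exists nu, future_unit_normal n F s nu /\
      forall i j, (i < n)%nat -> (j < n)%nat -> second_ff n F nu s i j = Kbar s i j.

Definition flat_metric (l : nat -> R) : (nat -> R) -> nat -> nat -> R :=
  fun _ i j => if Nat.eqb i j then (l i) ^ 2 else 0.

Definition Kbar_of (tau : R -> R) (l1 : R) : (nat -> R) -> nat -> nat -> R :=
  fun s i j => if andb (Nat.eqb i 0) (Nat.eqb j 0) then tau (s 0%nat) * l1 ^ 2 else 0.

(* Main.v *)
Require Import Defs.
From Stdlib Require Import Reals Lra Lia ZArith.
From Coquelicot Require Import Coquelicot.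
Open Scope R_scope.

Definition Ck (k : nat) (f : R -> R) : Prop :=
  forall m y, (m <= k)%nat -> ex_derive_n f m y.

Lemma Derive_n_S_of (f g : R -> R) :
  (forall x, is_derive f x (g x)) -> forall m x, Derive_n f (S m) x = Derive_n g m x.
Proof.
  intros H m x.
  rewrite <- Nat.add_1_r, <- Derive_n_comp.
  apply Derive_n_ext. intros t. simpl. apply is_derive_unique, H.
Qed.

Lemma Ck_step k f g : (forall x, is_derive f x (g x)) -> Ck k g -> Ck (S k) f.
Proof.
  intros H Hg m y Hm. destruct m as [|m]. exact I.
  destruct m as [|m].
  - simpl. exists (g y). apply H.
  - simpl. apply (ex_derive_ext (Derive_n g m)).
    + intros t. symmetry. apply (Derive_n_S_of f g H).
    + apply (Hg (S m) y). lia.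
Qed.

Lemma Ck_is_derive k f : Ck (S k) f -> forall x, is_derive f x (Derive f x).
Proof.
  intros H x. apply Derive_correct. apply (H 1%nat x). lia.
Qed.

Lemma Ck_Derive k f : Ck (S k) f -> Ck k (Derive f).
Proof.
  intros H m y Hm. destruct m as [|m]. exact I. simpl.
  apply (ex_derive_ext (Derive_n f (S m))).
  - intros t. apply (Derive_n_S_of f (Derive f) (Ck_is_derive k f H)).
  - apply (H (S (S m)) y). lia.
Qed.

Lemma Ck_mono k f : Ck (S k) f -> Ck k f.
Proof. intros H m y Hm. apply H. lia. Qed.

Lemma Ck_plus k f g : Ck k f -> Ck k g -> Ck k (fun x => f x + g x).
Proof.
  intros Hf Hg m y Hm. apply ex_derive_n_plus; apply filter_forall; intros z j Hj;
  [apply Hf | apply Hg]; lia.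
Qed.

Lemma Ck_const k a : Ck k (fun _ => a).
Proof. intros m y _. apply ex_derive_n_const. Qed.

Lemma Ck_ext k f g : (forall x, f x = g x) -> Ck k f -> Ck k g.
Proof. intros E H m y Hm. apply (ex_derive_n_ext f g m y E). apply H; auto. Qed.

Lemma Ck_0 f : Ck 0 f.
Proof. intros m y Hm. assert (m = 0%nat) by lia. subst. exact I. Qed.

Lemma Ck_mult k : forall f g, Ck k f -> Ck k g -> Ck k (fun x => f x * g x).
Proof.
  induction k as [|k IH]; intros f g Hf Hg. apply Ck_0.
  apply (Ck_step k _ (fun x => Derive f x * g x + f x * Derive g x)).
  - intros x. apply (is_derive_mult f g x (Derive f x) (Derive g x)).
    apply (Ck_is_derive k f Hf). apply (Ck_is_derive k g Hg).
    intros; apply Rmult_comm.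
  - apply Ck_plus.
    + apply IH. apply Ck_Derive; auto. apply Ck_mono; auto.
    + apply IH. apply Ck_mono; auto. apply Ck_Derive; auto.
Qed.

Lemma Ck_exp k : forall f, Ck k f -> Ck k (fun x => exp (f x)).
Proof.
  induction k as [|k IH]; intros f Hf. apply Ck_0.
  apply (Ck_step k _ (fun x => Derive f x * exp (f x))).
  - intros x. apply (is_derive_comp exp f x (exp (f x)) (Derive f x)).
    apply is_derive_exp. apply (Ck_is_derive k f Hf).
  - apply Ck_mult. apply Ck_Derive; auto. apply IH, Ck_mono; auto.
Qed.

Lemma smooth_Ck f : smooth1 f <-> forall k, Ck k f.
Proof.
  split. intros H k m y _. apply H. intros H k x. apply (H k k x). lia.
Qed.

Lemma sum_zero (f : nat -> R) N : (forall a, (a <= N)%nat -> f a = 0) -> sum_f_R0 f N = 0.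
Proof.
  induction N as [|N IH]; intros H; simpl. apply H; lia.
  rewrite IH. rewrite H. ring. lia. intros a Ha; apply H; lia.
Qed.

Lemma sum_single (f : nat -> R) N k :
  (forall a, a <> k -> f a = 0) -> (k <= N)%nat -> sum_f_R0 f N = f k.
Proof.
  induction N as [|N IH]; intros H Hk.
  - assert (k = 0%nat) by lia. subst. reflexivity.
  - rewrite tech5. destruct (Nat.eq_dec k (S N)) as [E|E].
    + subst. rewrite sum_zero. ring. intros a Ha. apply H. lia.
    + rewrite IH; auto. rewrite (H (S N)). ring. auto. lia.
Qed.

Lemma mink_ext n u v u' v' : (forall j, u j = u' j) -> (forall j, v j = v' j) ->
  mink n u v = mink n u' v'.
Proof.
  intros Hu Hv. unfold mink. rewrite Hu, Hv. f_equal.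
  apply sum_eq. intros i _. rewrite Hu, Hv. reflexivity.
Qed.

Lemma shift_deriv (f : R -> R) a l : is_derive f a l -> is_derive (fun h => f (a + h)) 0 l.
Proof.
  intros H. assert (H' : is_derive f (a + 0) l) by (rewrite Rplus_0_r; auto).
  pose proof (is_derive_comp f (fun h => a + h) 0 l 1 H') as K.
  assert (is_derive (fun h : R => a + h) 0 1) as K2.
  { auto_derive; auto. }
  specialize (K K2). replace l with (scal 1 l). exact K. unfold scal; simpl; unfold mult; simpl. ring.
Qed.

Definition Ev (D1t D1x : R -> R) (L : nat -> R) (s : nat -> R) (i j : nat) : R :=
  match i with
  | O => match j with O => D1t (s O) | 1%nat => D1x (s O) | _ => 0 end
  | S _ => if Nat.eqb j (S i) then L i else 0
  end.

Lemma pd_lift Gt Gx D1t D1x L s i j :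
  (forall x, is_derive Gt x (D1t x)) -> (forall x, is_derive Gx x (D1x x)) ->
  pd (product_lift Gt Gx L) i s j = Ev D1t D1x L s i j.
Proof.
  intros HGt HGx. unfold pd, product_lift, upd, Ev.
  destruct i as [|i]; destruct j as [|[|j]]; simpl.
  - apply is_derive_unique. apply shift_deriv, HGt.
  - apply is_derive_unique. apply shift_deriv, HGx.
  - apply Derive_const.
  - apply Derive_const.
  - apply Derive_const.
  - destruct (Nat.eqb j i) eqn:E.
    + apply Nat.eqb_eq in E. subst. apply is_derive_unique. auto_derive; auto. ring.
    + apply Derive_const.
Qed.

Definition Ev2 (D2t D2x : R -> R) (s : nat -> R) (i k j : nat) : R :=
  match i, k with
  | O, O => match j with O => D2t (s O) | 1%nat => D2x (s O) | _ => 0 end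
  | _, _ => 0
  end.

Lemma pd2_lift Gt Gx D1t D1x D2t D2x L s i k j :
  (forall x, is_derive Gt x (D1t x)) -> (forall x, is_derive Gx x (D1x x)) ->
  (forall x, is_derive D1t x (D2t x)) -> (forall x, is_derive D1x x (D2x x)) ->
  pd2 (product_lift Gt Gx L) i k s j = Ev2 D2t D2x s i k j.
Proof.
  intros HGt HGx H1 H2. unfold pd2.
  rewrite (Derive_ext _ (fun h => Ev D1t D1x L (upd s i h) k j)).
  2:{ intros t. apply pd_lift; auto. }
  unfold Ev, Ev2, upd.
  destruct k as [|k]; [destruct i as [|i]|]; destruct j as [|[|j]]; simpl;
    try apply Derive_const.
  - apply is_derive_unique. apply shift_deriv, H1.
  - apply is_derive_unique. apply shift_deriv, H2.
  - destruct i; apply Derive_const.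
  - destruct i; apply Derive_const.
  - destruct i; destruct (Nat.eqb j k); apply Derive_const.
Qed.

Lemma geom n (L : nat -> R) (tau Gt Gx D1t D1x D2t D2x : R -> R) :
  (1 <= n)%nat -> 0 < L O ->
  (forall x, is_derive Gt x (D1t x)) -> (forall x, is_derive Gx x (D1x x)) ->
  (forall x, is_derive D1t x (D2t x)) -> (forall x, is_derive D1x x (D2x x)) ->
  (forall x, D1x x ^ 2 - D1t x ^ 2 = L O ^ 2) -> (forall x, 0 < D1x x) ->
  (forall x, D1x x * D2t x - D1t x * D2x x = L O ^ 3 * tau x) ->
  induces n (product_lift Gt Gx L) (flat_metric L) (Kbar_of tau (L O)).
Proof.
  intros Hn Hc HGt HGx H1 H2 Hm Hp Hk s.
  set (c := L O) in *.
  split.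
  - intros i j Hi Hj. unfold induced_metric.
    rewrite (mink_ext n _ _ (Ev D1t D1x L s i) (Ev D1t D1x L s j));
      try (intros; apply pd_lift; auto).
    unfold mink, flat_metric.
    destruct i as [|i]; destruct j as [|j].
    + rewrite (sum_single _ _ 0%nat). simpl. specialize (Hm (s O)). unfold c in Hm.
      lra.
      intros a Ha. destruct a as [|[|a]]; simpl; try lia; ring. lia.
    + rewrite (sum_single _ _ 0%nat). simpl.
      destruct (Nat.eqb 1 (S (S j))) eqn:E; [apply Nat.eqb_eq in E; lia|]. ring.
      intros a Ha. destruct a as [|[|a]]; simpl; try lia; ring. lia.
    + rewrite (sum_single _ _ 0%nat). simpl.
      destruct (Nat.eqb 1 (S (S i))) eqn:E; [apply Nat.eqb_eq in E; lia|]. ring.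
      intros a Ha. destruct a as [|[|a]]; simpl; try lia;
      repeat match goal with |- context[Nat.eqb ?x ?y] => destruct (Nat.eqb x y) end; ring. lia.
    + rewrite (sum_single _ _ (S i)). simpl.
      destruct (Nat.eqb_spec i i); [|lia].
      destruct (Nat.eqb_spec i j).
      * subst. ring.
      * ring.
      * intros a Ha. simpl. destruct (Nat.eqb_spec a (S i)); [lia|]. ring.
      * lia.
  - set (nu := fun j => match j with O => D1x (s O) / c | 1%nat => D1t (s O) / c | _ => 0 end).
    exists nu. split; [split; [|split]|].
    + intros i Hi.
      rewrite (mink_ext n _ _ nu (Ev D1t D1x L s i)); try (intros; auto; apply pd_lift; auto).
      unfold mink. rewrite (sum_single _ _ 0%nat).
      * destruct i as [|i]; simpl.
        -- field. lra.
        -- destruct (Nat.eqb 1 (S (S i))) eqn:E; [apply Nat.eqb_eq in E; lia|]. ring.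
      * intros a Ha. destruct a as [|[|a]]; simpl; try lia; ring.
      * lia.
    + unfold mink. rewrite (sum_single _ _ 0%nat).
      * simpl. specialize (Hm (s O)).
        assert (E : D1x (s O) * D1x (s O) = c * c + D1t (s O) * D1t (s O)) by (simpl in Hm; lra).
        unfold Rdiv. replace (- (D1x (s O) * / c) * (D1x (s O) * / c)) with (- (D1x (s O) * D1x (s O)) * / c * / c) by ring.
        rewrite E. field. lra.
      * intros a Ha. destruct a as [|[|a]]; simpl; try lia; ring.
      * lia.
    + simpl. apply Rdiv_lt_0_compat; auto.
    + intros i j Hi Hj. unfold second_ff.
      rewrite (mink_ext n _ _ nu (Ev2 D2t D2x s i j)); try (intros; auto; apply pd2_lift; auto).
      unfold mink, Kbar_of. rewrite (sum_single _ _ 0%nat).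
      * destruct i as [|i]; destruct j as [|j]; simpl.
        -- specialize (Hk (s O)). fold c in Hk.
           assert (E : D1x (s O) * D2t (s O) = c ^ 3 * tau (s O) + D1t (s O) * D2x (s O)) by lra.
           unfold Rdiv.
           replace (- (- (D1x (s O) * / c) * D2t (s O) + D1t (s O) * / c * D2x (s O)))
             with ((D1x (s O) * D2t (s O)) * / c - D1t (s O) * / c * D2x (s O)) by ring.
           rewrite E. field. lra.
        -- ring.
        -- ring.
        -- ring.
      * intros a Ha. destruct a as [|[|a]]; simpl; try lia; try ring.
      * lia.
      * intros; apply (pd2_lift Gt Gx D1t D1x); auto.
Qed.

Lemma smooth_cont f : smooth1 f -> forall x, continuous f x.
Proof. intros H x. apply (@ex_derive_continuous R_AbsRing R_NormedModule f x). apply (H 1%nat x). Qed.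

Lemma RInt_ex (f : R -> R) a b : (forall x, continuous f x) -> ex_RInt f a b.
Proof. intros H. apply (@ex_RInt_continuous R_CompleteNormedModule). intros; auto. Qed.

Lemma RInt_deriv (f : R -> R) : (forall x, continuous f x) ->
  forall x, is_derive (fun s => RInt f 0 s) x (f x).
Proof.
  intros H x. apply (@is_derive_RInt R_NormedModule f (fun s => RInt f 0 s) 0 x).
  apply filter_forall. intros b. apply (@RInt_correct R_CompleteNormedModule), RInt_ex; auto. auto.
Qed.

Lemma RInt_diff (f : R -> R) a b : (forall x, continuous f x) ->
  RInt f 0 b - RInt f 0 a = RInt f a b.
Proof.
  intros H. rewrite <- (RInt_Chasles f 0 a b); try apply RInt_ex; auto.
  unfold plus; simpl. ring.
Qed.

Lemma RInt_shift1 (f : R -> R) s : (forall x, continuous f x) ->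
  RInt f 0 (s + 1) = RInt f 0 1 + RInt (fun y => f (y + 1)) 0 s.
Proof.
  intros H. rewrite <- (RInt_Chasles f 0 1 (s+1)); try apply RInt_ex; auto.
  unfold plus; simpl. f_equal.
  pose proof (RInt_comp_lin f 1 1 0 s) as K.
  replace (1 * 0 + 1) with 1 in K by ring. replace (1 * s + 1) with (s + 1) in K by ring.
  rewrite <- K. 2: apply RInt_ex; auto.
  apply RInt_ext. intros x _. unfold scal; simpl; unfold mult; simpl.
  replace (1 * x + 1) with (x + 1) by ring. ring.
Qed.

Lemma RInt_scal_R (f : R -> R) a b k : (forall x, continuous f x) ->
  RInt (fun x => k * f x) a b = k * RInt f a b.
Proof.
  intros H. pose proof (RInt_scal f a b k (RInt_ex f a b H)) as K.
  unfold scal in K; simpl in K; unfold mult in K; simpl in K. exact K.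
Qed.

Lemma shift_nat (F : R -> R) a : (forall s, F (s + 1) = exp a * F s) ->
  forall (n : nat) s, F (s + INR n) = exp (INR n * a) * F s.
Proof.
  intros H n. induction n as [|n IH]; intros s.
  - simpl. rewrite Rplus_0_r, Rmult_0_l, exp_0. ring.
  - rewrite S_INR. replace (s + (INR n + 1)) with ((s + INR n) + 1) by ring.
    rewrite H, IH. replace ((INR n + 1) * a) with (a + INR n * a) by ring.
    rewrite exp_plus. ring.
Qed.

Lemma shiftZ (F : R -> R) a : (forall s, F (s + 1) = exp a * F s) ->
  forall (k : Z) s, F (s + IZR k) = exp (IZR k * a) * F s.
Proof.
  intros H k s. destruct k as [|p|p].
  - simpl. rewrite Rplus_0_r, Rmult_0_l, exp_0. ring.
  - assert (E : IZR (Z.pos p) = INR (Pos.to_nat p)) by (rewrite INR_IZR_INZ, positive_nat_Z; auto).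
    rewrite E. apply shift_nat; auto.
  - assert (E : IZR (Z.pos p) = INR (Pos.to_nat p)) by (rewrite INR_IZR_INZ, positive_nat_Z; auto).
    rewrite IZR_NEG, E.
    pose proof (shift_nat F a H (Pos.to_nat p) (s - INR (Pos.to_nat p))) as K.
    replace (s - INR (Pos.to_nat p) + INR (Pos.to_nat p)) with s in K by ring.
    rewrite K. unfold Rminus. rewrite <- Rmult_assoc, <- exp_plus.
    replace (- INR (Pos.to_nat p) * a + INR (Pos.to_nat p) * a) with 0 by ring.
    rewrite exp_0. ring.
Qed.

Lemma incr_strict (f df : R -> R) : (forall x, is_derive f x (df x)) -> (forall x, 0 < df x) ->
  forall x y, x < y -> f x < f y.
Proof.
  intros H Hp x y Hxy. apply (incr_function f m_infty p_infty df); simpl; auto.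
  intros; apply Hp.
Qed.

Lemma incr_inj (f df : R -> R) : (forall x, is_derive f x (df x)) -> (forall x, 0 < df x) ->
  forall x y, f x = f y -> x = y.
Proof.
  intros H Hp x y E. destruct (Rtotal_order x y) as [h|[h|h]]; auto.
  - pose proof (incr_strict f df H Hp x y h). lra.
  - pose proof (incr_strict f df H Hp y x h). lra.
Qed.

Lemma smooth_step f g : (forall x, is_derive f x (g x)) -> smooth1 g -> smooth1 f.
Proof.
  intros H Hg. apply smooth_Ck. intros k. apply (Ck_mono k).
  apply (Ck_step k f g H). apply smooth_Ck; auto.
Qed.

Lemma smooth_lin2 a b f g : smooth1 f -> smooth1 g -> smooth1 (fun x => a * f x + b * g x).
Proof.
  intros Hf Hg. apply smooth_Ck. intros k. rewrite smooth_Ck in Hf, Hg.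
  apply Ck_plus; apply Ck_mult; auto; apply Ck_const.
Qed.

Lemma smooth_exp f : smooth1 f -> smooth1 (fun x => exp (f x)).
Proof. intros H. apply smooth_Ck. intros k. apply Ck_exp. apply smooth_Ck; auto. Qed.

Lemma smooth_ext f g : (forall x, f x = g x) -> smooth1 f -> smooth1 g.
Proof. intros E H k x. apply (ex_derive_n_ext f g k x E). apply H. Qed.

Definition psi c tau s := c * RInt tau 0 s.
Definition Ep c tau s := exp (psi c tau s).
Definition Em c tau s := exp (- psi c tau s).
Definition PP (c : R) (tau : R -> R) (s : R) : R := RInt (Ep c tau) 0 s.
Definition MM (c : R) (tau : R -> R) (s : R) : R := RInt (Em c tau) 0 s.




Lemma psi_der c tau : smooth1 tau -> forall x, is_derive (psi c tau) x (c * tau x).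
Proof.
  intros H x. unfold psi. apply (is_derive_scal (fun s => RInt tau 0 s)).
  apply RInt_deriv. apply smooth_cont; auto.
Qed.

Lemma psi_smooth c tau : smooth1 tau -> smooth1 (psi c tau).
Proof.
  intros H. apply (smooth_step _ (fun x => c * tau x)). apply psi_der; auto.
  apply (smooth_ext (fun x => c * tau x + 0 * tau x)). intros; ring.
  apply smooth_lin2; auto.
Qed.

Lemma Ep_smooth c tau : smooth1 tau -> smooth1 (Ep c tau).
Proof. intros H. apply smooth_exp, psi_smooth; auto. Qed.

Lemma Em_smooth c tau : smooth1 tau -> smooth1 (Em c tau).
Proof.
  intros H. apply smooth_exp.
  apply (smooth_ext (fun x => (-1) * psi c tau x + 0 * psi c tau x)). intros; ring.
  apply smooth_lin2; apply psi_smooth; auto.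
Qed.

Lemma Ep_der c tau : smooth1 tau -> forall x, is_derive (Ep c tau) x (c * tau x * Ep c tau x).
Proof.
  intros H x. unfold Ep.
  pose proof (is_derive_comp exp (psi c tau) x (exp (psi c tau x)) (c * tau x)
     (is_derive_exp _) (psi_der c tau H x)) as K.
  exact K.
Qed.

Lemma Em_der c tau : smooth1 tau -> forall x, is_derive (Em c tau) x (- (c * tau x) * Em c tau x).
Proof.
  intros H x. unfold Em.
  pose proof (is_derive_comp exp (fun s => - psi c tau s) x (exp (- psi c tau x)) (- (c * tau x))
     (is_derive_exp _) (is_derive_opp _ _ _ (psi_der c tau H x))) as K.
  exact K.
Qed.

Lemma PP_der c tau : smooth1 tau -> forall x, is_derive (PP c tau) x (Ep c tau x).
Proof. intros H. apply RInt_deriv, smooth_cont, Ep_smooth; auto. Qed.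

Lemma MM_der c tau : smooth1 tau -> forall x, is_derive (MM c tau) x (Em c tau x).
Proof. intros H. apply RInt_deriv, smooth_cont, Em_smooth; auto. Qed.

Lemma EpEm c tau x : Ep c tau x * Em c tau x = 1.
Proof. unfold Ep, Em. rewrite <- exp_plus. replace (_ + _) with 0 by ring. apply exp_0. Qed.

Definition Gt_ c tau a g b s := (a * PP c tau s - g * MM c tau s + b) / 2.
Definition Gx_ c tau a g b s := (a * PP c tau s + g * MM c tau s + b) / 2.
Definition D1t_ c tau a g s := (a * Ep c tau s - g * Em c tau s) / 2.
Definition D1x_ c tau a g s := (a * Ep c tau s + g * Em c tau s) / 2.
Definition D2t_ c tau a g s := c * tau s * (a * Ep c tau s + g * Em c tau s) / 2.
Definition D2x_ c tau a g s := c * tau s * (a * Ep c tau s - g * Em c tau s) / 2.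

Ltac dsolve H1 H2 :=
  let x := match goal with |- is_derive _ ?x _ => x end in
  auto_derive; [repeat split; eexists; [apply H1 | apply H2] |];
  repeat match goal with |- context [Derive (fun y => ?f y) ?z] =>
   change (Derive (fun y => f y) z) with (Derive f z);
   first [rewrite (is_derive_unique f z _ (H1 z)) | rewrite (is_derive_unique f z _ (H2 z))] end;
  field.

Lemma curve_generic n (L : nat -> R) c tau a g bt bx :
  (1 <= n)%nat -> smooth1 tau -> L O = c -> 0 < c -> 0 < a -> 0 < g -> a * g = c ^ 2 ->
  smooth1 (Gt_ c tau a g bt) /\ smooth1 (Gx_ c tau a g bx) /\
  (forall x, is_derive (Gx_ c tau a g bx) x (D1x_ c tau a g x)) /\
  (forall x, 0 < D1x_ c tau a g x) /\
  induces n (product_lift (Gt_ c tau a g bt) (Gx_ c tau a g bx) L) (flat_metric L) (Kbar_of tau (L O)).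
Proof.
  intros Hn Ht HL Hc Ha Hg Hag.
  pose proof (PP_der c tau Ht) as HP. pose proof (MM_der c tau Ht) as HM.
  pose proof (Ep_der c tau Ht) as HEp. pose proof (Em_der c tau Ht) as HEm.
  assert (D1 : forall x, is_derive (Gt_ c tau a g bt) x (D1t_ c tau a g x)).
  { intros x. unfold Gt_, D1t_. dsolve HP HM. }
  assert (D2 : forall x, is_derive (Gx_ c tau a g bx) x (D1x_ c tau a g x)).
  { intros x. unfold Gx_, D1x_. dsolve HP HM. }
  assert (D3 : forall x, is_derive (D1t_ c tau a g) x (D2t_ c tau a g x)).
  { intros x. unfold D1t_, D2t_. dsolve HEp HEm. }
  assert (D4 : forall x, is_derive (D1x_ c tau a g) x (D2x_ c tau a g x)).
  { intros x. unfold D1x_, D2x_. dsolve HEp HEm. }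
  assert (Pos : forall x, 0 < D1x_ c tau a g x).
  { intros x. unfold D1x_, Ep, Em. pose proof (exp_pos (psi c tau x)).
    pose proof (exp_pos (- psi c tau x)). nra. }
  assert (S1 : smooth1 (D1t_ c tau a g)).
  { apply (smooth_ext (fun x => (a/2) * Ep c tau x + (-g/2) * Em c tau x)).
    intros; unfold D1t_; field. apply smooth_lin2. apply Ep_smooth; auto. apply Em_smooth; auto. }
  assert (S2 : smooth1 (D1x_ c tau a g)).
  { apply (smooth_ext (fun x => (a/2) * Ep c tau x + (g/2) * Em c tau x)).
    intros; unfold D1x_; field. apply smooth_lin2. apply Ep_smooth; auto. apply Em_smooth; auto. }
  split; [|split; [|split; [|split]]].
  - apply (smooth_step _ _ D1); auto.
  - apply (smooth_step _ _ D2); auto.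
  - auto.
  - auto.
  - apply (geom n L tau _ _ (D1t_ c tau a g) (D1x_ c tau a g) (D2t_ c tau a g) (D2x_ c tau a g) Hn); auto.
    + rewrite HL; auto.
    + intros x. rewrite HL. unfold D1x_, D1t_. rewrite <- Hag.
      transitivity (a*g*(Ep c tau x * Em c tau x)). field. rewrite EpEm; ring.
    + intros x. rewrite HL. unfold D1x_, D1t_, D2t_, D2x_.
      replace (c ^ 3) with (c * (a * g)) by (rewrite Hag; ring).
      transitivity (c * tau x * (a*g*(Ep c tau x * Em c tau x))). field. rewrite EpEm; ring.
Qed.

Lemma psi_shift c tau : smooth1 tau -> periodic1 tau ->
  forall s, psi c tau (s + 1) = psi c tau s + c * RInt tau 0 1.
Proof.
  intros Ht Hp s. unfold psi. rewrite RInt_shift1. 2: apply smooth_cont; auto.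
  rewrite (RInt_ext (fun y => tau (y + 1)) tau). ring.
  intros x _. apply Hp.
Qed.

Lemma Ep_shift c tau : smooth1 tau -> periodic1 tau ->
  forall s, Ep c tau (s + 1) = exp (c * RInt tau 0 1) * Ep c tau s.
Proof.
  intros Ht Hp s. unfold Ep. rewrite psi_shift; auto. rewrite exp_plus. ring.
Qed.

Lemma Em_shift c tau : smooth1 tau -> periodic1 tau ->
  forall s, Em c tau (s + 1) = exp (- (c * RInt tau 0 1)) * Em c tau s.
Proof.
  intros Ht Hp s. unfold Em. rewrite psi_shift; auto.
  replace (- (psi c tau s + c * RInt tau 0 1)) with (- psi c tau s + - (c * RInt tau 0 1)) by ring.
  rewrite exp_plus. ring.
Qed.

Lemma PP_shift c tau : smooth1 tau -> periodic1 tau ->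
  forall s, PP c tau (s + 1) = PP c tau 1 + exp (c * RInt tau 0 1) * PP c tau s.
Proof.
  intros Ht Hp s. unfold PP. rewrite RInt_shift1. 2: apply smooth_cont, Ep_smooth; auto.
  f_equal. rewrite (RInt_ext _ (fun y => exp (c * RInt tau 0 1) * Ep c tau y)).
  apply RInt_scal_R. apply smooth_cont, Ep_smooth; auto.
  intros x _. apply Ep_shift; auto.
Qed.

Lemma MM_shift c tau : smooth1 tau -> periodic1 tau ->
  forall s, MM c tau (s + 1) = MM c tau 1 + exp (- (c * RInt tau 0 1)) * MM c tau s.
Proof.
  intros Ht Hp s. unfold MM. rewrite RInt_shift1. 2: apply smooth_cont, Em_smooth; auto.
  f_equal. rewrite (RInt_ext _ (fun y => exp (- (c * RInt tau 0 1)) * Em c tau y)).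
  apply RInt_scal_R. apply smooth_cont, Em_smooth; auto.
  intros x _. apply Em_shift; auto.
Qed.

Lemma Ep_pos c tau x : 0 < Ep c tau x.
Proof. apply exp_pos. Qed.
Lemma Em_pos c tau x : 0 < Em c tau x.
Proof. apply exp_pos. Qed.

Lemma kasner n (L : nat -> R) c tau :
  (1 <= n)%nat -> smooth1 tau -> periodic1 tau -> L O = c -> 0 < c ->
  c * RInt tau 0 1 <> 0 ->
  exists Gt Gx : R -> R,
    kasner_curve_lift (c * RInt tau 0 1) Gt Gx /\
    induces n (product_lift Gt Gx L) (flat_metric L) (Kbar_of tau (L O)).
Proof.
  intros Hn Ht Hp HL Hc HPsi.
  set (Psi := c * RInt tau 0 1) in *.
  set (Ex := exp Psi).
  assert (HE0 : 0 < Ex) by apply exp_pos.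
  assert (HE1 : Ex <> 1).
  { intro h. apply HPsi. apply exp_inv. unfold Ex in h. rewrite h, exp_0. auto. }
  assert (HEi : exp (- Psi) = / Ex) by apply exp_Ropp.
  assert (HE2 : / Ex - 1 <> 0).
  { intro h. apply HE1. assert (/ Ex = 1) by lra.
    rewrite <- (Rinv_inv Ex). rewrite H. apply Rinv_1. }
  assert (HE3 : Ex - 1 <> 0) by lra.
  set (P1 := PP c tau 1). set (M1 := MM c tau 1).
  set (bt := c * P1 / (Ex - 1) - c * M1 / (/ Ex - 1)).
  set (bx := c * P1 / (Ex - 1) + c * M1 / (/ Ex - 1)).
  destruct (curve_generic n L c tau c c bt bx Hn Ht HL Hc Hc Hc) as [SGt [SGx [DGx [PGx Ind]]]].
  { ring. }
  set (Gt := Gt_ c tau c c bt) in *. set (Gx := Gx_ c tau c c bx) in *.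
  exists Gt, Gx. split; [|exact Ind].
  set (u := fun s => Gt s + Gx s). set (v := fun s => Gt s - Gx s).
  assert (Hu : forall s, u s = c * PP c tau s + c * P1 / (Ex - 1)).
  { intros s. unfold u, Gt, Gx, Gt_, Gx_, bt, bx. field; repeat split; auto; lra. }
  assert (Hv : forall s, v s = - (c * MM c tau s) - c * M1 / (/ Ex - 1)).
  { intros s. unfold v, Gt, Gx, Gt_, Gx_, bt, bx. field; repeat split; auto; lra. }
  assert (U1 : forall s, u (s + 1) = Ex * u s).
  { intros s. rewrite !Hu, PP_shift; auto. fold Psi Ex P1. field; repeat split; auto; lra. }
  assert (V1 : forall s, v (s + 1) = / Ex * v s).
  { intros s. rewrite !Hv, MM_shift; auto. fold Psi M1. rewrite HEi. field; repeat split; auto; lra. }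
  assert (Du : forall x, is_derive u x (c * Ep c tau x)).
  { intros x. apply (is_derive_ext (fun s => c * PP c tau s + c * P1 / (Ex - 1))).
    intros; rewrite Hu; auto.
    pose proof (PP_der c tau Ht x).
    auto_derive. eexists; eauto.
    change (Derive (fun y => PP c tau y) x) with (Derive (PP c tau) x).
    rewrite (is_derive_unique _ _ _ H). ring. }
  assert (Dw : forall x, is_derive (fun s => - v s) x (c * Em c tau x)).
  { intros x. apply (is_derive_ext (fun s => c * MM c tau s + c * M1 / (/ Ex - 1))).
    intros t; cbv beta; assert (Hv2 : c * MM c tau t + c * M1 / (/ Ex - 1) = - v t) by (rewrite Hv; ring); exact Hv2.
    pose proof (MM_der c tau Ht x).
    auto_derive. eexists; eauto.
    change (Derive (fun y => MM c tau y) x) with (Derive (MM c tau) x).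
    rewrite (is_derive_unique _ _ _ H). ring. }
  assert (Pu : forall x, 0 < c * Ep c tau x).
  { intros; apply Rmult_lt_0_compat; auto; apply Ep_pos. }
  assert (Pw : forall x, 0 < c * Em c tau x).
  { intros; apply Rmult_lt_0_compat; auto; apply Em_pos. }
  assert (uinc : forall s, u s < u (s + 1)).
  { intros s. apply (incr_strict u _ Du Pu). lra. }
  assert (winc : forall s, - v s < - v (s + 1)).
  { intros s. apply (incr_strict (fun s => - v s) _ Dw Pw). lra. }
  assert (GtE : forall s, Gt s = (u s + v s) / 2) by (intros; unfold u, v; field).
  assert (GxE : forall s, Gx s = (u s - v s) / 2) by (intros; unfold u, v; field).
  split; [auto|split; [auto|split; [auto|split; [|split; [|split]]]]].
  - intros s. rewrite GtE, GxE. specialize (uinc s). specialize (winc s).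
    rewrite U1 in uinc. rewrite V1 in winc.
    destruct (Rlt_dec 0 Psi) as [h|h].
    + assert (1 < Ex). { unfold Ex. rewrite <- exp_0. apply exp_increasing; auto. }
      assert (/ Ex < 1). { rewrite <- Rinv_1. apply Rinv_lt_contravar; lra. }
      assert (0 < u s) by nra. assert (0 < v s) by nra.
      apply Rabs_def1; lra.
    + assert (Psi < 0) by (destruct (Rtotal_order Psi 0) as [|[|]]; lra).
      assert (Ex < 1). { unfold Ex. rewrite <- exp_0. apply exp_increasing; auto. }
      assert (1 < / Ex). { rewrite <- Rinv_1. apply Rinv_lt_contravar; lra. }
      assert (u s < 0) by nra. assert (v s < 0) by nra.
      apply Rabs_def1; lra.
  - exists 1%Z. intros s. unfold boost.
    replace (IZR 1 * Psi) with Psi by (simpl; ring).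
    rewrite !GtE, !GxE, U1, V1. unfold cosh, sinh. rewrite HEi. fold Ex.
    f_equal; field; lra.
  - intros s. right. rewrite (is_derive_unique _ _ _ (DGx s)). specialize (PGx s). lra.
  - intros s s' k H. injection H as H1 H2.
    exists k.
    assert (E1 : u s' = exp (IZR k * Psi) * u s).
    { unfold u. rewrite H1, H2. unfold cosh, sinh.
      replace (exp (- (IZR k * Psi))) with (/ exp (IZR k * Psi)) by (rewrite exp_Ropp; auto).
      field. apply Rgt_not_eq, exp_pos. }
    assert (E2 : u (s + IZR k) = exp (IZR k * Psi) * u s).
    { apply shiftZ. intros; apply U1. }
    apply (incr_inj u _ Du Pu). congruence.
Qed.

Lemma RInt_pos01 (f : R -> R) : (forall x, continuous f x) -> (forall x, 0 < f x) -> 0 < RInt f 0 1.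
Proof. intros Hc Hp. apply RInt_gt_0. lra. intros; auto. intros; auto. Qed.

Lemma cylinder n (L : nat -> R) c tau :
  (1 <= n)%nat -> smooth1 tau -> periodic1 tau -> L O = c -> 0 < c ->
  RInt tau 0 1 = 0 ->
  exists (L0 : R) (Gt Gx : R -> R),
    0 < L0 /\ cylinder_curve_lift L0 Gt Gx /\
    induces n (product_lift Gt Gx L) (flat_metric L) (Kbar_of tau (L O)).
Proof.
  intros Hn Ht Hp HL Hc HT.
  set (P1 := PP c tau 1). set (M1 := MM c tau 1).
  assert (HP1 : 0 < P1).
  { apply RInt_pos01. apply smooth_cont, Ep_smooth; auto. intros; apply Ep_pos. }
  assert (HM1 : 0 < M1).
  { apply RInt_pos01. apply smooth_cont, Em_smooth; auto. intros; apply Em_pos. }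
  set (a := sqrt (M1 / P1)).
  assert (Ha : 0 < a) by (apply sqrt_lt_R0, Rdiv_lt_0_compat; auto).
  assert (Ha2 : a * a = M1 / P1) by (apply sqrt_sqrt; left; apply Rdiv_lt_0_compat; auto).
  assert (Hal : 0 < c * a) by (apply Rmult_lt_0_compat; auto).
  assert (Hga : 0 < c / a) by (apply Rdiv_lt_0_compat; auto).
  destruct (curve_generic n L c tau (c * a) (c / a) 0 0 Hn Ht HL Hc Hal Hga) as [SGt [SGx [DGx [PGx Ind]]]].
  { field. apply Rgt_not_eq; auto. }
  set (Gt := Gt_ c tau (c * a) (c / a) 0) in *. set (Gx := Gx_ c tau (c * a) (c / a) 0) in *.
  set (L0 := (c * a * P1 + c / a * M1) / 2).
  assert (HL0 : 0 < L0).
  { unfold L0. assert (0 < c * a * P1) by (apply Rmult_lt_0_compat; auto).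
    assert (0 < c / a * M1) by (apply Rmult_lt_0_compat; auto). lra. }
  assert (PS : forall s, PP c tau (s + 1) = P1 + PP c tau s).
  { intros s. rewrite PP_shift; auto. rewrite HT, Rmult_0_r, exp_0. fold P1. rewrite Rmult_1_l. reflexivity. }
  assert (MS : forall s, MM c tau (s + 1) = M1 + MM c tau s).
  { intros s. rewrite MM_shift; auto. rewrite HT, Rmult_0_r, Ropp_0, exp_0. fold M1. rewrite Rmult_1_l. reflexivity. }
  assert (Bal : c * a * P1 = c / a * M1).
  { assert (M1 = a * a * P1) by (rewrite Ha2; field; lra). rewrite H. field. lra. }
  assert (GtS : forall s, Gt (s + 1) = Gt s).
  { intros s. unfold Gt, Gt_. rewrite PS, MS. lra. }
  assert (GxS : forall s, Gx (s + 1) = Gx s + L0).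
  { intros s. unfold Gx, Gx_, L0. rewrite PS, MS. lra. }
  exists L0, Gt, Gx. split; [auto|split; [|exact Ind]].
  split; [auto|split; [auto|split; [auto|split; [|split]]]].
  - exists 1%Z. intros s. split; auto. rewrite GxS. simpl. ring.
  - intros s. right. rewrite (is_derive_unique _ _ _ (DGx s)). specialize (PGx s). lra.
  - intros s s' k H1 H2. exists k.
    assert (E2 : exp (Gx (s + IZR k)) = exp (IZR k * L0) * exp (Gx s)).
    { apply (shiftZ (fun s => exp (Gx s))). intros t. rewrite GxS, exp_plus. ring. }
    rewrite <- exp_plus in E2. apply exp_inv in E2.
    apply (incr_inj Gx _ DGx PGx). rewrite H2, E2. ring.
Qed.

Theorem proposition6p2
  (n : nat) (l : nat -> R) (mu r : R) (tau N : R -> R) :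
  (3 <= n)%nat ->
  (forall k, (k < n)%nat -> 0 < l k) ->
  smooth1 tau -> periodic1 tau ->
  smooth1 N -> periodic1 N -> (forall x, 0 < N x) ->
  let tau_star := RInt (fun s => N s * tau s) 0 1 / RInt N 0 1 in
  ((mu * tau_star > 0 /\ r = Rpower (mu / tau_star) (/ INR n)) \/
   (mu = 0 /\ tau_star = 0 /\ 0 < r)) ->
  let gbar := flat_metric (fun k => r * l k) in
  let Kbar := Kbar_of tau (r * l 0%nat) in
  let tau_circ := RInt tau 0 1 in
  let lhat := fun k => r * l k in
  (tau_circ <> 0 ->
     exists Gt Gx : R -> R,
       kasner_curve_lift (r * l 0%nat * tau_circ) Gt Gx /\
       induces n (product_lift Gt Gx lhat) gbar Kbar) /\
  (tau_circ = 0 ->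
     exists (L : R) (Gt Gx : R -> R),
       0 < L /\ cylinder_curve_lift L Gt Gx /\
       induces n (product_lift Gt Gx lhat) gbar Kbar).
Proof.
  intros Hn Hl Ht Hpt HN HpN HNp tau_star Hcase gbar Kbar tau_circ lhat.
  assert (Hr : 0 < r).
  { destruct Hcase as [[_ ->]|[_ [_ h]]]; auto. unfold Rpower. apply exp_pos. }
  assert (Hl0 : 0 < l 0%nat) by (apply Hl; lia).
  assert (Hc : 0 < r * l 0%nat) by (apply Rmult_lt_0_compat; auto).
  assert (Hn1 : (1 <= n)%nat) by lia.
  split.
  - intros HT. apply (kasner n lhat (r * l 0%nat) tau Hn1 Ht Hpt); auto.
    apply Rmult_integral_contrapositive_currified; auto. lra.
  - intros HT. apply (cylinder n lhat (r * l 0%nat) tau Hn1 Ht Hpt); auto.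
Qed.
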